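(* Let $G$ be a finite group, $K$ a field of characteristic $0$ which is a splitting field for $G$ and all of its subgroups, and $N$ a normal subgroup of $G$ containing the commutator subgroup $G'$. Let $\chi$ be an irreducible character of $G$, $\eta$ an irreducible constituent of $\mathrm{res}^G_N\chi$, and $G_\eta=\{g\in G:{}^g\eta=\eta\}$. Write $\mathrm{ind}_N^{G_\eta}\eta=\sum_{i=1}^s m_i\psi_i$ with positive integers $m_i$ and pairwise distinct irreducible characters $\psi_i$ of $G_\eta$, numbered so that $\mathrm{ind}_{G_\eta}^G\psi_1=\chi$, and put $\psi:=\psi_1$, $m:=m_1$. Then: (i) each $\psi_i$ is of the form $\psi\otimes\omega_i$ for some $\omega_i\in\mathrm{Irr}(G_\eta/N)$; (ii) each $\psi\otimes\omega$ with $\omega\in\mathrm{Irr}(G_\eta/N)$ equals some $\psi_i$; (iii) $m_i=m$ for all $1\le i\le s$, and $[G_\eta:N]=sm^2$.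
   Context: $G$ acts on characters of $N$ by ${}^g\eta(x)=\eta(g^{-1}xg)$. $\mathrm{res}$ and $\mathrm{ind}$ denote restriction and induction of characters. Characters of $G_\eta/N$ are viewed as characters of $G_\eta$ by inflation. (By Clifford theory, the irreducible characters of $G$ whose restriction to $N$ contains $\eta$ are exactly the $\mathrm{ind}_{G_\eta}^G\psi_i$, which are irreducible, so exactly one index satisfies $\mathrm{ind}_{G_\eta}^G\psi_i=\chi$.) *)

(* Defs.v *)
From mathcomp Require Import all_boot all_order all_algebra all_fingroup all_solvable all_field all_character.
Set Implicit Arguments.
Unset Strict Implicit.
Unset Printing Implicit Defensive.

(* Main.v *)
Require Import Defs.
From mathcomp Require Import all_boot all_order all_algebra all_fingroup all_solvable all_field all_character.
Import GRing.Theory Num.Theory.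
Local Open Scope group_scope.
Local Open Scope ring_scope.

Lemma Ind1_sum_mod (gT : finGroupType) (T N : {group gT}) :
  N <| T -> abelian (T / N) ->
  'Ind[T, N] 1 = \sum_(w : Iirr (T / N)) ('chi_w %% N)%CF.
Proof.
move=> nsNT abTN; have [sNT nNT] := andP nsNT.
rewrite -raddf_sum /=.
have ->: \sum_(w : Iirr (T / N)) 'chi[T / N]_w = cfReg (T / N).
  rewrite cfReg_sum; apply: eq_bigr => w _.
  by rewrite lin_char1 ?scale1r //; apply/char_abelianP.
rewrite cfInd_cfun1 //; apply/cfun_inP => x Tx.
rewrite cfModE // cfRegE cfunE cfuniE // card_quotient //.
have Nx : x \in 'N(N) by apply: (subsetP nNT).
case xN: (x \in N).
  by rewrite coset_id // eqxx mulr1.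
case: eqP => [/(coset_idr Nx)|_]; first by rewrite xN.
by rewrite mulr0.
Qed.

Theorem proposition2p3 (gT : finGroupType) (G N : {group gT})
    (c : Iirr G) (e : Iirr N) (p : Iirr 'I_G['chi[N]_e]) :
  N <| G -> (G^`(1))%g \subset N ->
  e \in irr_constt ('Res[N] 'chi[G]_c) ->
  p \in irr_constt ('Ind['I_G['chi[N]_e]] 'chi[N]_e) ->
  'Ind[G] 'chi[ 'I_G['chi[N]_e]]_p = 'chi[G]_c ->
  let T := 'I_G['chi[N]_e] in
  let etaT := 'Ind[T] 'chi[N]_e in
  let m := '[etaT, 'chi[T]_p] in
  [/\ (* (i) *)
      forall i : Iirr T, i \in irr_constt etaT ->
        exists w : Iirr (T / N), 'chi[T]_i = 'chi[T]_p * ('chi[T / N]_w %% N)%CF,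
      (* (ii) *)
      forall w : Iirr (T / N), exists2 i : Iirr T, i \in irr_constt etaT &
        'chi[T]_i = 'chi[T]_p * ('chi[T / N]_w %% N)%CF
    & (* (iii) *)
      (forall i : Iirr T, i \in irr_constt etaT -> '[etaT, 'chi[T]_i] = m)
      /\ (#|T : N|)%:R = (#|irr_constt etaT|)%:R * m ^+ 2].
Proof.
move=> nsNG sG'N _ pIe _ T etaT m.
have sNG := normal_sub nsNG.
have sTG : T \subset G by apply: Inertia_sub.
have nsNT : N <| T by apply: normal_Inertia.
have abTN : abelian (T / N).
  by apply: sub_der1_abelian; apply: subset_trans sG'N; apply: dergS.
have TI : T \subset 'I['chi[N]_e] by apply: subsetIr.
set psi := 'chi[T]_p.
have eRes : e \in irr_constt ('Res[N] psi) by rewrite -constt_Ind_Res.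
have mN : m \in Num.nat.
  by apply: Cnat_cfdot_char; [apply: cfInd_char; apply: irr_char | apply: irr_char].
have ResPsi : 'Res[N] psi = m *: 'chi_e.
  rewrite (Clifford_Res_sum_cfclass nsNT eRes) cfclass_invariant //.
  rewrite big_seq1 cfdot_Res_l cfdotC conj_natr //.
have m0 : m != 0 by rewrite -irr_consttE.
have linw w : ('chi[T / N]_w %% N)%CF \is a linear_char.
  by apply: cfMod_lin_char; apply/char_abelianP.
have irrw w : psi * ('chi[T / N]_w %% N)%CF \in irr T.
  by rewrite mulrC mul_lin_irr ?mem_irr.
have Resw w : 'Res[N] (psi * ('chi[T / N]_w %% N)%CF) = 'Res[N] psi.
  rewrite rmorphM /= [X in _ * X](@cfRes_sub_ker _ T N) ?cfker_mod //.
  rewrite cfMod1 lin_char1; last exact/char_abelianP.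
  by rewrite scale1r mulr1.
have dotw w : '[etaT, psi * ('chi[T / N]_w %% N)%CF] = m.
  by rewrite -Frobenius_reciprocity Resw Frobenius_reciprocity.
have key : m *: etaT = \sum_w psi * ('chi[T / N]_w %% N)%CF.
  rewrite -mulr_sumr -Ind1_sum_mod // mulrC -cfIndM ?normal_sub // mul1r.
  by rewrite ResPsi linearZ.
have partI : forall i : Iirr T, i \in irr_constt etaT ->
        exists w : Iirr (T / N), 'chi[T]_i = psi * ('chi[T / N]_w %% N)%CF.
  move=> i iI.
  have : '[m *: etaT, 'chi_i] != 0 by rewrite cfdotZl mulf_neq0 // -irr_consttE.
  rewrite key cfdot_suml => nz.
  have [w nzw] : exists w, '[psi * ('chi[T / N]_w %% N)%CF, 'chi_i] != 0.
    apply/existsP; apply: contraR nz => /existsPn H.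
    by rewrite big1 // => w _; apply/eqP; apply: negbNE (H w).
  exists w; have [k Dk] := irrP (irrw w).
  move: nzw; rewrite Dk cfdot_irr pnatr_eq0 eqb0 negbK => /eqP <-.
  done.
have partIIIa : forall i : Iirr T, i \in irr_constt etaT -> '[etaT, 'chi[T]_i] = m.
  by move=> i /partI [w ->]; apply: dotw.
split=> //.
- move=> w; have [k Dk] := irrP (irrw w); exists k => //.
  by rewrite irr_consttE -Dk dotw.
split=> //.
have : '[etaT] = #|T : N|%:R.
  rewrite /etaT -Frobenius_reciprocity cfRes_Ind_invariant //.
  by rewrite cfdotZr cfnorm_irr mulr1 conjC_nat.
rewrite cfdot_sum_irr (bigID (fun i => i \in irr_constt etaT)) /=.
rewrite [X in _ + X]big1 ?addr0; last first.
  by move=> i; rewrite irr_consttE negbK => /eqP ->; rewrite mul0r.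
rewrite (eq_bigr (fun _ => m ^+ 2)); last first.
  by move=> i /partIIIa ->; rewrite conj_natr // expr2.
by rewrite sumr_const => <-; rewrite mulr_natl.
Qed.
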